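(* For every admissible sequence of bins $\sigma$ and all integers $s',\ell',k\ge 0$ with $2k=s'+2\ell'$, $$R(\sigma,s',\ell')\le \mathrm{OPT}(\sigma,0,k)+(s'+\ell'-k-1)L+M.$$
   Context: Fix an integer $S>1$, $L=2S-1$, $M=4S-3$. Bins have integer sizes in $[S,M]$ and arrive in a sequence $\sigma$, admissible if it ends with at least as many bins of size $M$ as there are items under consideration. A packing assigns every item to a bin with total item size in each bin at most the bin size; its cost is the sum of the sizes of bins receiving at least one item. A packing is valid if each empty bin is smaller than every item packed in a later bin. A bin is wasteful if its empty space is at least the size of some item packed in a later bin; a packing is thrifty if no bin is wasteful. A partial packing of a finite sequence of bins is reasonable if every bin $b$ of that sequence contains: one item of size $S$ if $\mathrm{size}(b)\in[S,L-1]$; one item of size $L$ if $\mathrm{size}(b)=L$; two items of size $S$ or one item of size $L$ if $\mathrm{size}(b)\in[L+1,L+S-1]$; one item of size $S$ and one of size $L$ if $\mathrm{size}(b)=L+S$; three items of size $S$ or one item of size $S$ and one of size $L$ if $\mathrm{size}(b)\in[L+S+1,2L-1]$. The key bin of a packing is the first bin after which no item of size $L$ remains unpacked or at most two items of size $S$ remain unpacked; the front is the restriction of the packing to the prefix ending with the key bin. A packing is reasonable if it is thrifty and its front is reasonable. $\mathrm{OPT}(\sigma,s,\ell)$ is the minimum cost of a valid packing of $s$ items of size $S$ and $\ell$ items of size $L$ into $\sigma$; $R(\sigma,s,\ell)$ is the maximum cost of a reasonable packing of these items into $\sigma$. *)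

(* Defs.v *)
From mathcomp Require Import all_boot all_order all_algebra.
Set Implicit Arguments. Unset Strict Implicit. Unset Printing Implicit Defensive.

Definition Lsz (S : nat) : nat := 2 * S - 1.
Definition Msz (S : nat) : nat := 4 * S - 3.

Definition bins_ok (S : nat) (sigma : seq nat) : bool :=
  all (fun b => (S <= b) && (b <= Msz S)) sigma.

Definition admissible (S : nat) (sigma : seq nat) (n : nat) : bool :=
  bins_ok S sigma && (n <= size sigma) &&
  all (fun b => b == Msz S) (drop (size sigma - n) sigma).

(* A packing of s items of size S (items 0..s-1) and l items of size L
   (items s..s+l-1) into the bins of sigma: an assignment of items to bins. *)
Definition packing (sigma : seq nat) (s l : nat) :=
  {ffun 'I_(s + l) -> 'I_(size sigma)}.

Section Packings.
Variables (S : nat) (sigma : seq nat) (s l : nat).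

Definition itemsize (i : 'I_(s + l)) : nat := if i < s then S else Lsz S.

Definition binsize (j : 'I_(size sigma)) : nat := nth 0 sigma j.

Definition load (f : packing sigma s l) (j : 'I_(size sigma)) : nat :=
  \sum_(i | f i == j) itemsize i.

Definition fits (f : packing sigma s l) : bool :=
  [forall j, load f j <= binsize j].

Definition used (f : packing sigma s l) (j : 'I_(size sigma)) : bool :=
  [exists i, f i == j].

Definition cost (f : packing sigma s l) : nat :=
  \sum_(j | used f j) binsize j.

Definition valid (f : packing sigma s l) : bool :=
  fits f &&
  [forall j, ~~ used f j ==>
     [forall i, (j < f i) ==> (binsize j < itemsize i)]].

Definition wasteful (f : packing sigma s l) (j : 'I_(size sigma)) : bool :=
  [exists i, (j < f i) && (itemsize i <= binsize j - load f j)].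

Definition thrifty (f : packing sigma s l) : bool :=
  [forall j, ~~ wasteful f j].

Definition cntS (f : packing sigma s l) (j : 'I_(size sigma)) : nat :=
  #|[pred i : 'I_(s + l) | (i < s) && (f i == j)]|.
Definition cntL (f : packing sigma s l) (j : 'I_(size sigma)) : nat :=
  #|[pred i : 'I_(s + l) | (s <= i) && (f i == j)]|.

Definition bin_reasonable (f : packing sigma s l) (j : 'I_(size sigma)) : bool :=
  let b := binsize j in
  let L := Lsz S in
  let c := (cntS f j, cntL f j) in
  if b < L then c == (1, 0)
  else if b == L then c == (0, 1)
  else if b < L + S then (c == (2, 0)) || (c == (0, 1))
  else if b == L + S then c == (1, 1)
  else (c == (3, 0)) || (c == (1, 1)).

Definition key_cond (f : packing sigma s l) (j : 'I_(size sigma)) : bool :=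
  (#|[pred i : 'I_(s + l) | (s <= i) && (j < f i)]| == 0) ||
  (#|[pred i : 'I_(s + l) | (i < s) && (j < f i)]| <= 2).

(* the front (bins up to and including the key bin, i.e. the first bin
   satisfying key_cond) is reasonable *)
Definition front_reasonable (f : packing sigma s l) : bool :=
  [forall j : 'I_(size sigma), [forall j' : 'I_(size sigma), (j' < j) ==> ~~ key_cond f j']
              ==> bin_reasonable f j].

Definition reasonable (f : packing sigma s l) : bool :=
  fits f && thrifty f && front_reasonable f.

End Packings.

(* The default value
   sumn sigma is an upper bound on the cost of every packing, so it does not
   affect the minimum as soon as a valid packing exists (which is the case
   for admissible sigma). *)
Definition OPT (S : nat) (sigma : seq nat) (s l : nat) : nat :=
  \big[minn/sumn sigma]_(f : packing sigma s l | valid S f) cost f.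

Definition R (S : nat) (sigma : seq nat) (s l : nat) : nat :=
  \max_(f : packing sigma s l | reasonable S f) cost f.

(* Main.v *)
Require Import Defs.
From mathcomp Require Import all_boot all_order all_algebra.
From mathcomp Require Import zify.
Set Implicit Arguments. Unset Strict Implicit. Unset Printing Implicit Defensive.

Section Gen.
Variables (S : nat) (sigma : seq nat) (s l : nat).
Implicit Types (f : packing sigma s l).

Definition cnt f (j : 'I_(size sigma)) := #|[pred i : 'I_(s + l) | f i == j]|.

Lemma card_sum f (P : pred 'I_(s+l)) (A : pred 'I_(size sigma)) :
  \sum_(j | A j) #|[pred i | P i && (f i == j)]| = #|[pred i | P i && A (f i)]|.
Proof.
rewrite -sum1_card (partition_big f A) /=; last by move=> i /andP[].
apply: eq_bigr => j Aj; rewrite -sum1_card; apply: eq_bigl => i.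
rewrite !inE; case: eqP => [->|]; by rewrite ?Aj ?andbT ?andbF.
Qed.

Lemma card_lt (m n : nat) : m <= n -> #|[pred i : 'I_n | i < m]| = m.
Proof.
move=> mn; rewrite -sum1_card.
have := @big_ord_widen nat 0 addn m n (fun _ => 1) mn. rewrite big_const_ord iter_addn_0 mul1n => <-.
done.
Qed.

Lemma sum_cntS f : \sum_j cntS f j = s.
Proof.
rewrite (eq_bigr (fun j : 'I_(size sigma) => #|[pred i : 'I_(s+l) | (i < s) && (f i == j)]|)) //.
rewrite (card_sum f (fun i : 'I_(s+l) => i < s) predT).
transitivity #|[pred i : 'I_(s+l) | i < s]|; last exact: card_lt (leq_addr l s).
by apply: eq_card => i; rewrite !inE andbT.
Qed.

Lemma sum_cntL f : \sum_j cntL f j = l.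
Proof.
rewrite (eq_bigr (fun j : 'I_(size sigma) => #|[pred i : 'I_(s+l) | (s <= i) && (f i == j)]|)) //.
rewrite (card_sum f (fun i : 'I_(s+l) => s <= i) predT).
have H := cardID [pred i : 'I_(s+l) | i < s] [pred i : 'I_(s+l) | true].
rewrite card_ord in H.
have H1 : #|[predI [pred i : 'I_(s+l) | true] & [pred i : 'I_(s+l) | i < s]]| = s.
  transitivity #|[pred i : 'I_(s+l) | i < s]|; last exact: card_lt (leq_addr l s).
  by apply: eq_card => i; rewrite !inE.
have H2 : #|[predD [pred i : 'I_(s+l) | true] & [pred i : 'I_(s+l) | i < s]]| = #|[pred i : 'I_(s+l) | (s <= i) && predT (f i)]|.
  apply: eq_card => i; rewrite !inE /=; by case: ltnP.
rewrite -H2; move: H; rewrite H1; move: (#|_|) => x; lia.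
Qed.

Lemma cntE f j : cnt f j = cntS f j + cntL f j.
Proof.
rewrite /cnt -(cardID [pred i : 'I_(s+l) | i < s] [pred i : 'I_(s+l) | f i == j]).
congr (_ + _); apply: eq_card => i; rewrite !inE /=.
  by rewrite andbC.
by case: ltnP; rewrite ?andbF.
Qed.

Lemma sum_cnt f : \sum_j cnt f j = s + l.
Proof.
rewrite (eq_bigr (fun j : 'I_(size sigma) => #|[pred i : 'I_(s+l) | true && (f i == j)]|)) //.
rewrite (card_sum f predT predT) -[in RHS](card_ord (s+l)).
by apply: eq_card => i; rewrite !inE.
Qed.

Lemma usedE f j : used f j = (0 < cnt f j).
Proof.
rewrite /used /cnt; apply/existsP/card_gt0P => [[i Hi]|[i Hi]]; exists i; by rewrite ?inE in Hi *.
Qed.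

Lemma loadE f j : load S f j = cntS f j * S + cntL f j * Lsz S.
Proof.
rewrite /load (bigID (fun i : 'I_(s+l) => i < s)) /=.
congr (_ + _).
  rewrite (eq_bigr (fun=> S)); last by move=> i /andP[_ H]; rewrite /itemsize H.
  rewrite sum_nat_const /cntS; congr (_ * _); apply: eq_card => i; rewrite !inE /= andbC //.
rewrite (eq_bigr (fun=> Lsz S)); last by move=> i /andP[_ H]; rewrite /itemsize (negbTE H).
rewrite sum_nat_const /cntL; congr (_ * _); apply: eq_card => i; rewrite !inE /= andbC leqNgt //.
Qed.

End Gen.

Section G.
Variables (S : nat) (sigma : seq nat) (k : nat).
Hypothesis HS : 1 < S.
Hypothesis Hok : bins_ok S sigma.
Variable g : packing sigma 0 k.
Hypothesis Hg : valid S g.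
Local Notation L := (Lsz S).

Lemma bin_bounds (j : 'I_(size sigma)) : S <= binsize j <= 2 * L - 1.
Proof.
move/all_nthP: Hok => /(_ 0 j (ltn_ord j)) /andP[H1 H2].
rewrite /binsize H1 /=; move: H2; rewrite /Msz /Lsz; lia.
Qed.

Lemma g_load j : load S g j = cnt g j * L.
Proof.
rewrite loadE cntE.
have -> : cntS g j = 0 by apply: eq_card0 => i; rewrite !inE ltn0.
by rewrite mul0n.
Qed.

Lemma g_fits j : load S g j <= binsize j.
Proof. by move: Hg => /andP[/forallP H _]; apply: H. Qed.

Lemma g_cnt1 j : cnt g j <= 1.
Proof.
have := g_fits j; rewrite g_load; have := bin_bounds j; rewrite /Lsz; nia.
Qed.

Lemma g_used_big j : used g j -> L <= binsize j.
Proof.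
rewrite usedE => H; have := g_fits j; rewrite g_load; nia.
Qed.

Lemma g_card : #|[pred j | used g j]| = k.
Proof.
transitivity (\sum_j cnt g j); last by rewrite sum_cnt.
rewrite -sum1_card big_mkcond /=; apply: eq_bigr => j _.
rewrite inE usedE; have := g_cnt1 j; case: (cnt g j) => [|[|n]] //.
Qed.

Lemma g_down (j j' : 'I_(size sigma)) : L <= binsize j -> used g j' -> j < j' -> used g j.
Proof.
move=> Hb /existsP[i /eqP Hi] Hjj'; apply: contraTT isT => Hn.
move: Hg => /andP[_ /forallP /(_ j)]; rewrite Hn /= => /forallP /(_ i).
rewrite Hi Hjj' /= /itemsize ltn0; lia.
Qed.

End G.

Lemma ar1 c a b : c = a + b -> 0 < c -> 2 <= a + 2 * b + a.
Proof. lia. Qed.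
Lemma ar2 k c : c <= 2 -> 2 * k + 2 + 2 <= 2 * k + c -> False.
Proof. lia. Qed.
Lemma ar3 S b : 2 * S - 1 < b -> S <= b - S.
Proof. lia. Qed.
Lemma ar4 k : 2 * k + 2 <= 2 * k -> False.
Proof. lia. Qed.

Section F.
Variables (S : nat) (sigma : seq nat) (s l k : nat).
Hypothesis HS : 1 < S.
Hypothesis Hok : bins_ok S sigma.
Hypothesis Hk : 2 * k = s + 2 * l.
Variable g : packing sigma 0 k.
Hypothesis Hg : valid S g.
Variable f : packing sigma s l.
Hypothesis Hf : reasonable S f.
Local Notation L := (Lsz S).

Lemma f_thrifty : thrifty S f.
Proof. by case/andP: Hf => /andP[]. Qed.

Lemma f_front : front_reasonable S f.
Proof. by case/andP: Hf. Qed.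

Lemma itemsize_le (i : 'I_(s+l)) : itemsize S i <= L.
Proof. rewrite /itemsize /Lsz; case: (_ < _); lia. Qed.

Lemma unused_load j : ~~ used f j -> load S f j = 0.
Proof.
rewrite usedE cntE loadE -leqNgt leqn0 addn_eq0 => /andP[/eqP -> /eqP ->] //.
Qed.

Lemma f_down (j j' : 'I_(size sigma)) : L <= binsize j -> used f j' -> j < j' -> used f j.
Proof.
move=> Hb /existsP[i /eqP Hi] Hjj'; apply: contraTT isT => Hn.
have := f_thrifty => /forallP /(_ j) /existsPn /(_ i).
rewrite Hi Hjj' /= unused_load // subn0.
have := itemsize_le i; lia.
Qed.

Definition bad j := used f j && ~~ used g j && (L * cnt f j < binsize j).

Lemma main_sum : cost f + L * k <= cost g + L * (s + l) + (L - 1) * #|[pred j | bad j]|.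
Proof.
have E1 : forall (s0 l0 : nat) (h : packing sigma s0 l0), cost h = \sum_j (if used h j then binsize j else 0).
  by move=> s0 l0 h; rewrite /cost big_mkcond.
have E2 : L * k = \sum_j (if used g j then L else 0).
  rewrite -big_mkcond /= sum_nat_const mulnC; congr (_ * _).
  symmetry; etransitivity; last exact: (g_card HS Hok Hg).
  by apply: eq_card => j; rewrite !inE.
have E3 : L * (s + l) = \sum_j L * cnt f j by rewrite -big_distrr sum_cnt.
have E4 : (L - 1) * #|[pred j | bad j]| = \sum_j (if bad j then L - 1 else 0).
  by rewrite -big_mkcond /= sum_nat_const mulnC.
rewrite E1 E1 E2 E3 E4 -!big_split /=; apply: leq_sum => j _.
have Hb := bin_bounds HS Hok Hg j.
have Hc := usedE f j.
have Hgb : used g j -> L <= binsize j := @g_used_big S sigma k HS Hok g Hg j.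
rewrite /bad; case Uf: (used f j); case Ug: (used g j) => /=; rewrite ?andbF /=.
- have H1 : 0 < cnt f j by rewrite -usedE Uf.
  have := Hgb Ug; have := leq_pmulr L H1; lia.
- have H1 : 0 < cnt f j by rewrite -usedE Uf.
  have := leq_pmulr L H1; case: (ltnP (L * cnt f j) (binsize j)) => H2; lia.
- have := Hgb Ug; lia.
- lia.
Qed.


Lemma br_big j : bin_reasonable S f j -> L <= binsize j -> 2 <= cntS f j + 2 * cntL f j.
Proof.
move=> + Hb; rewrite /bin_reasonable /=.
case: ifP => [H1|_]; first by move: H1; rewrite ltnNge Hb.
case: ifP => [_ /eqP [-> ->] //|_].
case: ifP => [_ /orP [/eqP [-> ->]|/eqP [-> ->]] //|_].
case: ifP => [_ /eqP [-> ->] //|_].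
by case/orP => /eqP [-> ->].
Qed.

Lemma bad_facts j : bad j -> [/\ used f j, ~~ used g j, cnt f j = 1 & L < binsize j].
Proof.
rewrite /bad => /andP[/andP[U V] Hlt].
have Hb := bin_bounds HS Hok Hg j.
have H1 : 0 < cnt f j by rewrite -usedE.
have H2 : cnt f j = 1.
  move: Hlt Hb H1; case: (cnt f j) => [|[|n]] //; rewrite !mulnS; lia.
split => //; move: Hlt; rewrite H2 muln1 //.
Qed.

Lemma two_bad (j1 j2 : 'I_(size sigma)) : j1 < j2 -> bad j1 -> bad j2 -> False.
Proof.
move=> lt12 B1 B2.
have [U1 V1 C1 L1] := bad_facts B1.
have [U2 V2 C2 L2] := bad_facts B2.
have n0 : 0 < size sigma by apply: leq_ltn_trans (ltn_ord j2).
have hl : (size sigma).-1 < size sigma by rewrite ltn_predL.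
pose jl : 'I_(size sigma) := Ordinal hl.
have Kl : key_cond f jl.
  rewrite /key_cond; apply/orP; left; apply/eqP; apply: eq_card0 => i; rewrite !inE /=.
  have := ltn_ord (f i); rewrite -[X in _ < X](prednK n0) ltnS leqNgt => /negbTE ->.
  by rewrite andbF.
case: (arg_minnP (fun j : 'I_(size sigma) => nat_of_ord j) Kl) => t Kt Tmin.
have Front : forall j : 'I_(size sigma), j <= t -> bin_reasonable S f j.
  move=> j jt; move: f_front => /forallP /(_ j) /implyP; apply.
  apply/forallP => j'; apply/implyP => jj'; apply/negP => Kj'.
  by move: (Tmin _ Kj'); rewrite leqNgt (leq_trans jj' jt).
have Sw : \sum_j (cntS f j + 2 * cntL f j) = 2 * k.
  by rewrite big_split /= -big_distrr sum_cntS sum_cntL Hk.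
have Vbig : forall j, used g j -> L <= binsize j.
  by move=> j; apply: (g_used_big HS Hok Hg).
have VltJ1 : forall j : 'I_(size sigma), used g j -> j < j1.
  move=> j Vj; rewrite ltnNge leq_eqVlt; apply/negP => /orP[/eqP E|lt].
    have E' : j1 = j by apply: val_inj.
    by move: V1; rewrite E' Vj.
  by have := g_down HS Hok Hg (ltnW L1) Vj lt; rewrite (negbTE V1).
have VU : forall j, used g j -> used f j.
  move=> j Vj; exact: (f_down (Vbig j Vj) U1 (VltJ1 j Vj)).
have EV : \sum_j (if used g j then 2 else 0) = 2 * k.
  rewrite -big_mkcond /= sum_nat_const mulnC; congr (_ * _).
  etransitivity; last exact: (g_card HS Hok Hg).
  by apply: eq_card => j; rewrite !inE.
have Ep : forall j0 : 'I_(size sigma), \sum_j (if j == j0 then 2 else 0) = 2.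
  by move=> j0; rewrite -big_mkcond big_pred1_eq.
case: (leqP j1 t) => j1t.
  have : \sum_j ((if used g j then 2 else 0) + (if j == j1 then 2 else 0)) <= \sum_j (cntS f j + 2 * cntL f j).
    apply: leq_sum => j _.
    case: (leqP j t) => jt.
      have BR := Front j jt.
      case Vj: (used g j); case: eqP => [E|NE].
      - by move: V1; rewrite -E Vj.
      - by rewrite /= addn0; exact: br_big BR (Vbig j Vj).
      - by rewrite E /=; exact: br_big (Front j1 j1t) (ltnW L1).
      - by [].
    case Vj: (used g j).
      rewrite ltnNge in jt; case/negP: jt; apply: ltnW; exact: leq_trans (VltJ1 j Vj) j1t.
    case: eqP => [E|_]; last by [].
    by move: jt; rewrite E ltnNge j1t.
  rewrite big_split /= EV Ep Sw; exact: ar4.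
case/orP: Kt => [KA|KB].
  have noL : forall i : 'I_(s+l), s <= i -> f i <= t.
    move=> i si; rewrite leqNgt; apply/negP => ti.
    by move/eqP/card0_eq/(_ i): KA; rewrite !inE si ti.
  have CL : cntL f j1 = 0.
    apply: eq_card0 => i; rewrite !inE; apply/negP => /andP[si /eqP fi].
    by have := noL i si; rewrite fi leqNgt j1t.
  have CS : cntS f j1 = 1 by move: C1; rewrite cntE CL addn0.
  have LD : load S f j1 = S by rewrite loadE CS CL mul1n mul0n addn0.
  move: U2 => /existsP [i /eqP fi].
  have His : i < s.
    rewrite ltnNge; apply/negP => si; by have := noL i si; rewrite fi leqNgt (ltn_trans j1t lt12).
  have := f_thrifty; rewrite /thrifty => /forallP /(_ j1) /negP W; apply: W.
  apply/existsP; exists i; rewrite fi lt12 /= /itemsize His LD.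
  by apply: ar3; move: L1; rewrite /Lsz.
have Esa : \sum_(j : 'I_(size sigma)) (if t < j then cntS f j else 0) = #|[pred i : 'I_(s+l) | (i < s) && (t < f i)]|.
  rewrite -big_mkcond /=; exact: (card_sum f (fun i : 'I_(s+l) => i < s) (fun j : 'I_(size sigma) => t < j)).
have : \sum_j ((if used g j then 2 else 0) + (if j == j1 then 2 else 0) + (if j == j2 then 2 else 0))
       <= \sum_j (cntS f j + 2 * cntL f j + (if t < j then cntS f j else 0)).
  apply: leq_sum => j _.
  case: (leqP j t) => jt.
    have BR := Front j jt.
    case: eqP => [E|_]; first by move: jt; rewrite E leqNgt j1t.
    case: eqP => [E|_]; first by move: jt; rewrite E leqNgt (ltn_trans j1t lt12).
    case Vj: (used g j) => //; rewrite /= !addn0; exact: br_big BR (Vbig j Vj).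

  have Hc := cntE f j.
  case: eqP => [E1|N1]; case: eqP => [E2|N2].
  - by move: lt12; rewrite -E1 -E2 ltnn.
  - move: Hc; rewrite E1 (negbTE V1) /= add0n addn0 => Hc; apply: (ar1 Hc); by rewrite C1.
  - move: Hc; rewrite E2 (negbTE V2) /= !addn0 => Hc; apply: (ar1 Hc); by rewrite C2.
  - case Vj: (used g j) => //=; rewrite !addn0.
    apply: (ar1 Hc); by rewrite -usedE VU.
rewrite [X in _ <= X]big_split /= Sw Esa !big_split /= EV !Ep; exact: ar2.
Qed.

Lemma bad_le1 : #|[pred j | bad j]| <= 1.
Proof.
rewrite leqNgt; apply/negP => /card_gt1P [j1 [j2 [H1 H2 Hne]]].
rewrite !inE /= in H1 H2.
case: (ltngtP j1 j2) => [lt|gt|eq].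
- exact: (two_bad lt H1 H2).
- exact: (two_bad gt H2 H1).
- by move: Hne; rewrite (val_inj eq) eqxx.
Qed.


Lemma core : cost f + L <= cost g + (s + l - k) * L + Msz S.
Proof.
have H1 := main_sum.
have H2 := bad_le1.
have Hks : k <= s + l by lia.
have E : L * (s + l) = L * k + (s + l - k) * L by rewrite [(s + l - k) * L]mulnC -mulnDr subnKC.
have E2 : (L - 1) * #|[pred j | bad j]| <= L - 1.
  by move: H2; case: #|_| => [|[|]] //; rewrite ?muln0 ?muln1.
have EM : Msz S = L + (L - 1) by rewrite /Msz /Lsz; lia.
move: H1 E2; rewrite E EM.
move: (L * k) ((s + l - k) * L) ((L - 1) * #|[pred j | bad j]|) (cost f) (cost g) => a b c d e; lia.
Qed.

End F.

Lemma cost_le_sumn (sigma : seq nat) (s l : nat) (f : packing sigma s l) : cost f <= sumn sigma.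
Proof.
rewrite /cost sumnE (big_nth 0) big_mkord big_mkcond /=.
apply: leq_sum => j _; case: (used f j) => //.
Qed.

Lemma R_bound (S : nat) (sigma : seq nat) (s l k : nat) (HS : 1 < S) (Hok : bins_ok S sigma) (Hk : 2 * k = s + 2 * l) :
  R S sigma s l <= OPT S sigma 0 k + (s + l - k) * Lsz S + (Msz S - Lsz S).
Proof.
have LM : Lsz S <= Msz S by rewrite /Lsz /Msz; lia.
apply/bigmax_leqP => f Hf.
rewrite /OPT.
apply: (big_ind (fun x => cost f <= x + (s + l - k) * Lsz S + (Msz S - Lsz S))).
- have := cost_le_sumn f; move: ((s + l - k) * Lsz S) => x; lia.
- by move=> x y Hx Hy; case: (leqP x y).
- move=> g Hg; have := core HS Hok Hk Hg Hf; move: ((s + l - k) * Lsz S) => x; lia.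
Qed.

Unset Implicit Arguments.
Import GRing.Theory Num.Theory.

Theorem lemma6 (S : nat) (HS : 1 < S) (sigma : seq nat) (s' l' k : nat)
  (Hadm : admissible S sigma (s' + l'))
  (Hk : 2 * k = s' + 2 * l') :
  ((R S sigma s' l')%:Z <=
     (OPT S sigma 0 k)%:Z
     + ((s' + l')%:Z - k%:Z - 1) * (Lsz S)%:Z + (Msz S)%:Z)%R.
Proof.
have Hok : bins_ok S sigma by case/andP: Hadm => /andP[].
have H := R_bound HS Hok Hk.
have LM : Lsz S <= Msz S by rewrite /Lsz /Msz; lia.
have hk : k <= s' + l' by lia.
have -> : ((s' + l')%:Z = (s' + l' - k)%:Z + k%:Z)%R by rewrite -PoszD subnK.
rewrite addrK mulrBl mul1r -PoszM.
move: H LM; move: (R S sigma s' l') (OPT S sigma 0 k) ((s' + l' - k) * Lsz S) (Lsz S) (Msz S) => r o x L M H LM.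
lia.
Qed.
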